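(* Let $\langle X,d\rangle$ be a metric space. The following are equivalent: (1) $X$ is cofinally Bourbaki quasi-complete; (2) every continuous function $f$ from $X$ to any metric space $\langle Y,\rho\rangle$ maps every cofinally Bourbaki quasi-Cauchy sequence in $X$ to a sequence in $Y$ that has a Cauchy subsequence; (3) every continuous function from $X$ to any metric space $\langle Y,\rho\rangle$ maps every cofinally Bourbaki quasi-Cauchy sequence in $X$ to a cofinally Cauchy sequence in $Y$; (4) every continuous function from $X$ to any metric space $\langle Y,\rho\rangle$ maps every cofinally Bourbaki quasi-Cauchy sequence in $X$ to a cofinally Bourbaki-Cauchy sequence in $Y$; (5) every real-valued continuous function on $X$ maps every cofinally Bourbaki quasi-Cauchy sequence in $X$ to a cofinally Bourbaki-Cauchy sequence in $\mathbb{R}$.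
   Context: For $\varepsilon>0$, an $\varepsilon$-chain joining $x,y$ is a finite sequence $x=x_0,\dots,x_n=y$ with $d(x_{i-1},x_i)<\varepsilon$. A sequence $\langle x_n\rangle$ in $X$ is cofinally Bourbaki quasi-Cauchy if for every $\varepsilon>0$ there is an infinite $N_\varepsilon\subseteq\mathbb{N}$ such that any $x_j,x_k$ with $j,k\in N_\varepsilon$ can be joined by an $\varepsilon$-chain; $X$ is cofinally Bourbaki quasi-complete if every such sequence has a cluster point. A sequence $\langle y_n\rangle$ in $\langle Y,\rho\rangle$ is cofinally Cauchy if for every $\varepsilon>0$ there is an infinite $N_\varepsilon\subseteq\mathbb{N}$ with $\rho(y_n,y_m)<\varepsilon$ for all $n,m\in N_\varepsilon$. Let $S^1_\rho(p,\varepsilon)$ be the open $\varepsilon$-ball about $p$ and $S^{m}_\rho(p,\varepsilon)=\{y:\rho(y,S^{m-1}_\rho(p,\varepsilon))<\varepsilon\}$; $\langle y_n\rangle$ is cofinally Bourbaki-Cauchy if for every $\varepsilon>0$ there exist an infinite $N_\varepsilon\subseteq\mathbb{N}$, $m\in\mathbb{N}$, $p\in Y$ with $y_n\in S^m_\rho(p,\varepsilon)$ for all $n\in N_\varepsilon$. *)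

(* Defs.v *)
From Stdlib Require Import Reals Lra Arith.
Open Scope R_scope.

Record MetricSpace := {
  carrier :> Type;
  dist : carrier -> carrier -> R;
  dist_nonneg : forall x y, 0 <= dist x y;
  dist_eq0 : forall x y, dist x y = 0 <-> x = y;
  dist_sym : forall x y, dist x y = dist y x;
  dist_tri : forall x y z, dist x z <= dist x y + dist y z
}.

Arguments dist {m} _ _.

Definition R_dist_nonneg (x y : R) : 0 <= Rabs (x - y) := Rabs_pos _.
Lemma R_dist_eq0 (x y : R) : Rabs (x - y) = 0 <-> x = y.
Proof.
  split; intro H.
  - destruct (Rcase_abs (x - y)); [rewrite Rabs_left in H by lra | rewrite Rabs_right in H by lra]; lra.
  - subst; replace (y - y) with 0 by ring; apply Rabs_R0.
Qed.
Lemma R_dist_sym (x y : R) : Rabs (x - y) = Rabs (y - x).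
Proof. apply Rabs_minus_sym. Qed.
Lemma R_dist_tri (x y z : R) : Rabs (x - z) <= Rabs (x - y) + Rabs (y - z).
Proof. replace (x - z) with ((x - y) + (y - z)) by ring. apply Rabs_triang. Qed.

Definition R_metric : MetricSpace :=
  {| carrier := R; dist := fun x y => Rabs (x - y);
     dist_nonneg := R_dist_nonneg; dist_eq0 := R_dist_eq0;
     dist_sym := R_dist_sym; dist_tri := R_dist_tri |}.

Definition infinite_nat (N : nat -> Prop) : Prop :=
  forall n0 : nat, exists n, (n0 <= n)%nat /\ N n.

Definition eps_chain {X : MetricSpace} (eps : R) (x y : X) : Prop :=
  exists (n : nat) (c : nat -> X),
    c 0%nat = x /\ c n = y /\ (forall i, (i < n)%nat -> dist (c i) (c (S i)) < eps).

Definition cofinally_Bourbaki_quasi_Cauchy {X : MetricSpace} (x : nat -> X) : Prop :=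
  forall eps, 0 < eps ->
    exists N : nat -> Prop, infinite_nat N /\
      forall j k, N j -> N k -> eps_chain eps (x j) (x k).

Definition cluster_point {X : MetricSpace} (x : nat -> X) (p : X) : Prop :=
  forall eps, 0 < eps -> forall n0 : nat, exists n, (n0 <= n)%nat /\ dist (x n) p < eps.

Definition cofinally_Bourbaki_quasi_complete (X : MetricSpace) : Prop :=
  forall x : nat -> X, cofinally_Bourbaki_quasi_Cauchy x -> exists p, cluster_point x p.

Definition continuous_map {X Y : MetricSpace} (f : X -> Y) : Prop :=
  forall x eps, 0 < eps -> exists delta, 0 < delta /\
    forall x', dist x x' < delta -> dist (f x) (f x') < eps.

Definition cauchy_seq {Y : MetricSpace} (y : nat -> Y) : Prop :=
  forall eps, 0 < eps -> exists n0 : nat,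
    forall n m, (n0 <= n)%nat -> (n0 <= m)%nat -> dist (y n) (y m) < eps.

Definition has_cauchy_subseq {Y : MetricSpace} (y : nat -> Y) : Prop :=
  exists phi : nat -> nat, (forall n, (phi n < phi (S n))%nat) /\
    cauchy_seq (fun n => y (phi n)).

Definition cofinally_Cauchy {Y : MetricSpace} (y : nat -> Y) : Prop :=
  forall eps, 0 < eps ->
    exists N : nat -> Prop, infinite_nat N /\
      forall n m, N n -> N m -> dist (y n) (y m) < eps.

(* S_iter p eps k = S^{k+1}_rho(p, eps):
   S^1 = open eps-ball about p,
   S^{m+1} = { y | rho(y, S^m) < eps } = { y | exists z in S^m, rho(y,z) < eps }. *)
Fixpoint S_iter {Y : MetricSpace} (p : Y) (eps : R) (k : nat) : Y -> Prop :=
  match k with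
  | 0%nat => fun y => dist p y < eps
  | S k' => fun y => exists z, S_iter p eps k' z /\ dist y z < eps
  end.

Definition S_m {Y : MetricSpace} (m : nat) (p : Y) (eps : R) : Y -> Prop :=
  S_iter p eps (m - 1).

Definition cofinally_Bourbaki_Cauchy {Y : MetricSpace} (y : nat -> Y) : Prop :=
  forall eps, 0 < eps ->
    exists (N : nat -> Prop) (m : nat) (p : Y),
      infinite_nat N /\ (1 <= m)%nat /\ forall n, N n -> S_m m p eps (y n).

(* Main.v *)
Require Import Defs.
From Stdlib Require Import Reals Lra Lia Classical ClassicalEpsilon.
Open Scope R_scope.
Notation dist := Defs.dist.
Notation dist_sym := Defs.dist_sym.
Notation dist_tri := Defs.dist_tri.

Lemma phi_ge (phi : nat -> nat) : (forall n, (phi n < phi (S n))%nat) -> forall n, (n <= phi n)%nat.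
Proof. intros H n; induction n; [lia|specialize (H n); lia]. Qed.

Lemma P2_P3 (Y : MetricSpace) (y : nat -> Y) : has_cauchy_subseq y -> cofinally_Cauchy y.
Proof.
  intros [phi [Hphi Hc]] eps Heps.
  destruct (Hc eps Heps) as [n0 Hn0].
  exists (fun k => exists i, (n0 <= i)%nat /\ k = phi i). split.
  - intros k0. exists (phi (Nat.max n0 k0)). split.
    + pose proof (phi_ge phi Hphi (Nat.max n0 k0)); lia.
    + exists (Nat.max n0 k0); split; [lia|reflexivity].
  - intros n m [i [Hi ->]] [j [Hj ->]]. apply Hn0; assumption.
Qed.

Lemma P3_P4 (Y : MetricSpace) (y : nat -> Y) : cofinally_Cauchy y -> cofinally_Bourbaki_Cauchy y.
Proof.
  intros H eps Heps. destruct (H eps Heps) as [N [HN Hd]].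
  destruct (HN 0%nat) as [n1 [_ Hn1]].
  exists N, 1%nat, (y n1). split; [exact HN|split; [lia|]].
  intros n Hn. unfold S_m. simpl. apply Hd; assumption.
Qed.

Lemma P1_P2 (X : MetricSpace) (Y : MetricSpace) (f : X -> Y) (x : nat -> X) (p : X) :
  continuous_map f -> cluster_point x p -> has_cauchy_subseq (fun n => f (x n)).
Proof.
  intros Hf Hp.
  assert (G : forall k n0 : nat, {n | (n0 <= n)%nat /\ dist (x n) p < / INR (S k)}).
  { intros k n0. apply constructive_indefinite_description.
    apply Hp. apply Rinv_0_lt_compat, lt_0_INR; lia. }
  set (g := fun k n0 => proj1_sig (G k n0)).
  assert (Hg1 : forall k n0, (n0 <= g k n0)%nat) by (intros; exact (proj1 (proj2_sig (G k n0)))).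
  assert (Hg2 : forall k n0, dist (x (g k n0)) p < / INR (S k)) by (intros; exact (proj2 (proj2_sig (G k n0)))).
  set (phi := fix phi k := match k with 0%nat => g 0%nat 0%nat | S k' => g (S k') (S (phi k')) end).
  assert (Hphi2 : forall k, dist (x (phi k)) p < / INR (S k)).
  { intros [|k]; simpl; apply Hg2. }
  exists phi. split.
  - intros n. simpl. specialize (Hg1 (S n) (S (phi n))). lia.
  - intros eps Heps.
    destruct (Hf p (eps/2)) as [d [Hd Hdd]]; [lra|].
    destruct (INR_unbounded (/ d)) as [n0 Hn0].
    exists n0. intros n m Hn Hm.
    assert (Hk : forall k, (n0 <= k)%nat -> dist (f p) (f (x (phi k))) < eps/2).
    { intros k Hk. apply Hdd. rewrite dist_sym.
      eapply Rlt_trans; [apply Hphi2|].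
      assert (INR n0 <= INR (S k)) by (apply le_INR; lia).
      rewrite <- (Rinv_inv d). apply Rinv_lt_contravar.
      - apply Rmult_lt_0_compat; [apply Rinv_0_lt_compat; lra| apply lt_0_INR; lia].
      - lra. }
    eapply Rle_lt_trans; [apply (dist_tri _ _ (f p))|].
    rewrite (dist_sym _ (f (x (phi n)))). pose proof (Hk n Hn). pose proof (Hk m Hm). lra.
Qed.

Lemma S_iter_bound (p eps : R) (k : nat) (y : R) :
  S_iter (Y := R_metric) p eps k y -> Rabs (p - y) < INR (S k) * eps.
Proof.
  revert y; induction k; intros y H.
  - simpl in H. simpl. lra.
  - destruct H as [z [Hz Hyz]]. specialize (IHk z Hz). simpl in Hyz.
    pose proof (Defs.R_dist_tri p z y). rewrite (Defs.R_dist_sym z y) in H.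
    rewrite S_INR. lra.
Qed.


Definition Eset (X : MetricSpace) (x : nat -> X) (z : X) : R -> Prop :=
  fun r => exists n, r = - (dist z (x n) + / INR (S n)).

Lemma Eset_bound X x z : bound (Eset X x z).
Proof.
  exists 0. intros r [n ->].
  pose proof (dist_nonneg X z (x n)).
  assert (0 < / INR (S n)) by (apply Rinv_0_lt_compat, lt_0_INR; lia). lra.
Qed.

Lemma Eset_ne X x z : exists r, Eset X x z r.
Proof. eexists; exists 0%nat; reflexivity. Qed.

Definition Ff (X : MetricSpace) (x : nat -> X) (z : X) : R :=
  - proj1_sig (completeness _ (Eset_bound X x z) (Eset_ne X x z)).

Lemma Ff_le X x z n : Ff X x z <= dist z (x n) + / INR (S n).
Proof.
  unfold Ff. generalize (completeness _ (Eset_bound X x z) (Eset_ne X x z)); intros [m [Hub Hl]]; cbn [proj1_sig].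
  assert (Eset X x z (- (dist z (x n) + / INR (S n)))) by (exists n; reflexivity).
  specialize (Hub _ H). lra.
Qed.

Lemma Ff_ge X x z c : (forall n, c <= dist z (x n) + / INR (S n)) -> c <= Ff X x z.
Proof.
  intros Hc. unfold Ff. generalize (completeness _ (Eset_bound X x z) (Eset_ne X x z)); intros [m [Hub Hl]]; cbn [proj1_sig].
  assert (m <= - c); [|lra].
  apply Hl. intros r [n ->]. specialize (Hc n). lra.
Qed.

Lemma Ff_lip X x z w : Ff X x z <= dist z w + Ff X x w.
Proof.
  assert (Ff X x z - dist z w <= Ff X x w); [|lra].
  apply Ff_ge. intros n. pose proof (Ff_le X x z n). pose proof (dist_tri X z w (x n)). lra.
Qed.

Lemma P5_P1 (X : MetricSpace) :
  (forall f : X -> R_metric, continuous_map f ->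
     forall x : nat -> X, cofinally_Bourbaki_quasi_Cauchy x ->
       cofinally_Bourbaki_Cauchy (Y := R_metric) (fun n => f (x n))) ->
  cofinally_Bourbaki_quasi_complete X.
Proof.
  intros H5 x Hx. apply NNPP; intro Hno.
  assert (Hpos : forall z, 0 < Ff X x z).
  { intros z.
    assert (Hnc : ~ cluster_point x z) by (intro; apply Hno; exists z; auto).
    unfold cluster_point in Hnc.
    destruct (not_all_ex_not _ _ Hnc) as [eps H1].
    destruct (imply_to_and _ _ H1) as [Heps H2].
    destruct (not_all_ex_not _ _ H2) as [n0 H3].
    pose proof (not_ex_all_not _ _ H3) as H4. simpl in H4.
    assert (0 < / INR (S n0)) by (apply Rinv_0_lt_compat, lt_0_INR; lia).
    apply Rlt_le_trans with (Rmin eps (/ INR (S n0))).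
    { apply Rmin_glb_lt; lra. }
    apply Ff_ge. intros n.
    pose proof (dist_nonneg X z (x n)).
    assert (0 < / INR (S n)) by (apply Rinv_0_lt_compat, lt_0_INR; lia).
    destruct (Compare_dec.le_lt_dec n0 n) as [Hle|Hlt].
    - assert (~ dist (x n) z < eps) by (intro; apply (H4 n); split; assumption).
      rewrite dist_sym. pose proof (Rmin_l eps (/ INR (S n0))). lra.
    - assert (/ INR (S n0) <= / INR (S n)).
      { apply Rinv_le_contravar; [apply lt_0_INR; lia| apply le_INR; lia]. }
      pose proof (Rmin_r eps (/ INR (S n0))). lra. }
  set (f := (fun z => / Ff X x z) : X -> R_metric).
  assert (Hf : continuous_map f).
  { intros z eps Heps. set (a := Ff X x z). assert (Ha : 0 < a) by apply Hpos.
    exists (Rmin (a/2) (eps*a*a/2)). split.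
    { apply Rmin_glb_lt; [lra|]. apply Rmult_lt_0_compat; [|lra].
      apply Rmult_lt_0_compat; [apply Rmult_lt_0_compat|]; lra. }
    intros w Hw. set (b := Ff X x w).
    pose proof (Ff_lip X x z w). pose proof (Ff_lip X x w z).
    rewrite dist_sym in H0. fold a b in H, H0.
    pose proof (Rmin_l (a/2) (eps*a*a/2)). pose proof (Rmin_r (a/2) (eps*a*a/2)).
    assert (Hb : a/2 < b) by lra.
    assert (Hab : Rabs (b - a) < eps*a*a/2) by (apply Rabs_def1; lra).
    simpl. unfold f. fold a b.
    replace (/ a - / b) with ((b - a) * / (a * b)) by (field; lra).
    rewrite Rabs_mult, (Rabs_right (/ (a*b))).
    2:{ apply Rle_ge, Rlt_le, Rinv_0_lt_compat, Rmult_lt_0_compat; lra. }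
    apply Rmult_lt_reg_r with (a*b); [apply Rmult_lt_0_compat; lra|].
    rewrite Rmult_assoc, Rinv_l by (apply Rgt_not_eq, Rmult_lt_0_compat; lra).
    rewrite Rmult_1_r. nra. }
  assert (Hfx : forall n, INR (S n) <= f (x n)).
  { intros n. unfold f. cbn [carrier R_metric].
    pose proof (Ff_le X x (x n) n).
    assert (dist (x n) (x n) = 0) by (apply dist_eq0; reflexivity).
    rewrite <- (Rinv_inv (INR (S n))). apply Rinv_le_contravar; [apply Hpos|lra]. }
  destruct (H5 f Hf x Hx 1 Rlt_0_1) as [N [m [p [HN [Hm HS]]]]].
  destruct (INR_unbounded (Rabs p + INR m)) as [n0 Hn0].
  destruct (HN n0) as [n [Hn HNn]].
  specialize (HS n HNn). unfold S_m in HS. apply S_iter_bound in HS.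
  replace (S (m - 1)) with m in HS by lia.
  specialize (Hfx n). assert (INR n0 <= INR (S n)) by (apply le_INR; lia).
  pose proof (Rle_abs p). pose proof (Rle_abs (- (p - f (x n)))). rewrite Rabs_Ropp in H1. lra.
Qed.

Theorem mainTheorem7 (X : MetricSpace) :
  let P1 := cofinally_Bourbaki_quasi_complete X in
  let P2 := forall (Y : MetricSpace) (f : X -> Y), continuous_map f ->
              forall x : nat -> X, cofinally_Bourbaki_quasi_Cauchy x ->
                has_cauchy_subseq (fun n => f (x n)) in
  let P3 := forall (Y : MetricSpace) (f : X -> Y), continuous_map f ->
              forall x : nat -> X, cofinally_Bourbaki_quasi_Cauchy x ->
                cofinally_Cauchy (fun n => f (x n)) in
  let P4 := forall (Y : MetricSpace) (f : X -> Y), continuous_map f ->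
              forall x : nat -> X, cofinally_Bourbaki_quasi_Cauchy x ->
                cofinally_Bourbaki_Cauchy (fun n => f (x n)) in
  let P5 := forall f : X -> R_metric, continuous_map f ->
              forall x : nat -> X, cofinally_Bourbaki_quasi_Cauchy x ->
                cofinally_Bourbaki_Cauchy (Y := R_metric) (fun n => f (x n)) in
  (P1 <-> P2) /\ (P1 <-> P3) /\ (P1 <-> P4) /\ (P1 <-> P5).
Proof.
  intros P1 P2 P3 P4 P5.
  assert (H12 : P1 -> P2).
  { intros H Y f Hf x Hx. destruct (H x Hx) as [p Hp]. exact (P1_P2 X Y f x p Hf Hp). }
  assert (H23 : P2 -> P3) by (intros H Y f Hf x Hx; apply P2_P3, H; assumption).
  assert (H34 : P3 -> P4) by (intros H Y f Hf x Hx; apply P3_P4, H; assumption).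
  assert (H45 : P4 -> P5) by (intros H f Hf x Hx; apply H; assumption).
  assert (H51 : P5 -> P1) by apply P5_P1.
  tauto.
Qed.
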